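(* Let $p$ be a lattice norm on $\mathbb{R}^2$ with $p((1,0))=1$ and let $\Phi$ be an Orlicz function satisfying $\lim_{u\to+\infty}\Phi(u)/u=+\infty$. Then for every $x\in L^\Phi(\mu)\setminus\{0\}$ there exists $l\in(0,+\infty)$ such that $$\|x\|_{\Phi,p}=\frac1l\,p\big((1,I_\Phi(lx))\big).$$
   Context: $(\Omega,\Sigma,\mu)$ is a $\sigma$-finite complete measure space, $L^0$ the space of (classes of a.e. equal) real measurable functions. An Orlicz function is a function $\Phi:\mathbb{R}\to[0,\infty)$ which is convex, even, vanishes at $0$ and is not identically zero. $I_\Phi(x)=\int_\Omega\Phi(x(t))\,d\mu\in[0,+\infty]$; $L^\Phi(\mu)=\{x\in L^0: I_\Phi(\lambda x)<\infty\text{ for some }\lambda>0\}$. A lattice norm on $\mathbb{R}^2$ is a norm $p$ with $p((u,v))\le p((u',v'))$ whenever $|u|\le|u'|,|v|\le|v'|$. For such $p$ with $p((1,0))=1$, $\|x\|_{\Phi,p}=\inf_{k>0}\frac1k p((1,I_\Phi(kx)))$ for $x\in L^\Phi(\mu)$, with the convention $p((1,+\infty))=+\infty$. *)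

(* Defs.v *)
From HB Require Import structures.
From mathcomp Require Import all_boot all_order all_algebra.
From mathcomp Require Import all_classical all_reals all_analysis.
Set Implicit Arguments. Unset Strict Implicit. Unset Printing Implicit Defensive.
Import Order.TTheory GRing.Theory Num.Theory.
Local Open Scope classical_set_scope.
Local Open Scope ring_scope.

Definition orlicz_fun (R : realType) (Phi : R -> R) : Prop :=
  [/\ (forall (a x y : R), 0 <= a -> a <= 1 ->
         Phi (a * x + (1 - a) * y) <= a * Phi x + (1 - a) * Phi y),
      (forall x, Phi (- x) = Phi x),
      Phi 0 = 0 &
      exists x, Phi x != 0].

Definition lattice_norm (R : realType) (p : R * R -> R) : Prop :=
  [/\ (forall v, p v = 0 -> v = (0, 0)),
      (forall (a : R) v, p (a * v.1, a * v.2) = `|a| * p v),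
      (forall v w, p (v.1 + w.1, v.2 + w.2) <= p v + p w) &
      (forall u v u' v', `|u| <= `|u'| -> `|v| <= `|v'| -> p (u, v) <= p (u', v'))].

Definition orlicz_modular (R : realType) d (T : measurableType d)
  (mu : {measure set T -> \bar R}) (Phi : R -> R) (x : T -> R) : \bar R :=
  (\int[mu]_(t in setT) (Phi (x t))%:E)%E.

Definition in_orlicz_space (R : realType) d (T : measurableType d)
  (mu : {measure set T -> \bar R}) (Phi : R -> R) (x : T -> R) : Prop :=
  measurable_fun setT x /\
  exists lam : R, 0 < lam /\ (orlicz_modular mu Phi (fun t => (lam * x t)%R) < +oo)%E.

Definition p_ext (R : realType) (p : R * R -> R) (s : \bar R) : \bar R :=
  match s with
  | EFin r => (p (1, r))%:E
  | +oo%E => +oo%E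
  | -oo%E => +oo%E (* never used: I_Phi >= 0 *)
  end.

Definition orlicz_p_norm (R : realType) d (T : measurableType d)
  (mu : {measure set T -> \bar R}) (Phi : R -> R) (p : R * R -> R)
  (x : T -> R) : \bar R :=
  ereal_inf [set ((k^-1)%:E * p_ext p (orlicz_modular mu Phi (fun t => (k * x t)%R)))%E
            | k in [set k : R | 0 < k]].

(* Main.v *)
Require Import Defs.
From HB Require Import structures.
From mathcomp Require Import all_boot all_order all_algebra.
From mathcomp Require Import all_classical all_reals all_analysis.
From mathcomp Require Import measurable_realfun ring lra.
Import Order.TTheory GRing.Theory Num.Theory.
Local Open Scope classical_set_scope.
Local Open Scope ring_scope.

Section pfacts.
Variables (R : realType) (p : R * R -> R).
Hypothesis hp : lattice_norm p.

Lemma p00 : p (0, 0) = 0.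
Proof.
case: hp => _ hom _ _.
by have := hom 0 (0, 0); rewrite /= mul0r normr0 mul0r.
Qed.

Lemma p_ge0 u v : 0 <= p (u, v).
Proof.
case: hp => _ _ _ mon; rewrite -p00; apply: mon; by rewrite normr0.
Qed.

Lemma pscale a u v : p (a * u, a * v) = `|a| * p (u, v).
Proof. by case: hp => _ hom _ _; exact: (hom a (u, v)). Qed.

Lemma p01_gt0 : 0 < p (0, 1).
Proof.
case: hp => h0 _ _ _; rewrite lt_neqAle p_ge0 andbT.
by apply/eqP => /esym /h0 [] /eqP; rewrite oner_eq0.
Qed.

Lemma p0s s : p (0, s) = `|s| * p (0, 1).
Proof. by rewrite -pscale mulr0 mulr1. Qed.

Lemma p1_ge1 s : p (1, 0) = 1 -> 1 <= p (1, s).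
Proof.
case: hp => _ _ _ mon p10; rewrite -{1}p10; apply: mon => //; by rewrite normr0.
Qed.

Lemma p1_mono s s' : 0 <= s -> s <= s' -> p (1, s) <= p (1, s').
Proof.
case: hp => _ _ _ mon s0 ss; apply: mon => //.
by rewrite !ger0_norm // (le_trans s0).
Qed.

Lemma p1_lb s : 0 <= s -> s * p (0, 1) <= p (1, s).
Proof.
case: hp => _ _ _ mon s0; rewrite -(ger0_norm s0) -p0s; apply: mon => //.
by rewrite normr0 normr1.
by rewrite normr_id.
Qed.

Lemma p1_lip s s' : s <= s' -> p (1, s') <= p (1, s) + (s' - s) * p (0, 1).
Proof.
case: hp => _ _ tri _ ss.
have := tri (1, s) (0, s' - s); rewrite /= addr0 addrC subrK p0s ger0_norm //.
by rewrite subr_ge0.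
Qed.
End pfacts.
Section phifacts.
Variables (R : realType) (Phi : R -> R).
Hypothesis hP : orlicz_fun Phi.

Lemma Phi_ge0 u : 0 <= Phi u.
Proof.
case: hP => cv ev P0 _.
have := cv (2^-1) u (- u); rewrite ev.
have -> : 2^-1 * u + (1 - 2^-1) * - u = 0 by field.
rewrite P0 => h.
have := h ltac:(lra) ltac:(lra); lra.
Qed.

Lemma Phi_scale a u : 0 <= a -> a <= 1 -> Phi (a * u) <= a * Phi u.
Proof.
case: hP => cv _ P0 _ a0 a1.
by have := cv a u 0 a0 a1; rewrite mulr0 addr0 P0 mulr0 addr0.
Qed.

Lemma Phi_abs u : Phi `|u| = Phi u.
Proof. case: hP => _ ev _ _; case: (ger0P u) => // _; exact: ev. Qed.

Lemma Phi_mono u v : `|u| <= `|v| -> Phi u <= Phi v.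
Proof.
move=> uv; rewrite -Phi_abs -(Phi_abs v).
have [v0|v0] := eqVneq `|v| 0.
  move: uv; rewrite v0 normr_le0 => /eqP ->; by rewrite normr0.
have vp : 0 < `|v| by rewrite lt0r v0 normr_ge0.
have -> : `|u| = (`|u| / `|v|) * `|v| by rewrite divfK.
have h1 : 0 <= `|u| / `|v| by rewrite divr_ge0.
have h2 : `|u| / `|v| <= 1 by rewrite ler_pdivrMr // mul1r.
apply: le_trans (Phi_scale _ _ h1 h2) _.
by rewrite ler_piMl ?Phi_ge0.
Qed.

Lemma Phi_low t u : 0 <= t -> t <= 1 ->
  (2 - t) * Phi u - (1 - t) * Phi (2 * u) <= Phi (t * u).
Proof.
case: hP => cv _ _ _ t0 t1.
have a0 : 0 <= (2 - t)^-1 by rewrite invr_ge0; lra.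
have a1 : (2 - t)^-1 <= 1 by rewrite invf_le1; lra.
have := cv _ (t * u) (2 * u) a0 a1.
have tp : 2 - t != 0 by apply/eqP; lra.
have -> : (2 - t)^-1 * (t * u) + (1 - (2 - t)^-1) * (2 * u) = u by field.
move=> h.
have := ler_wpM2l (ltW (_ : 0 < 2 - t)) h.
have -> : (2 - t) * ((2 - t)^-1 * Phi (t * u) + (1 - (2 - t)^-1) * Phi (2 * u)) =
   Phi (t * u) + (1 - t) * Phi (2 * u) by field.
move=> /(_ ltac:(lra)); lra.
Qed.

Lemma Phi_meas : measurable_fun setT Phi.
Proof.
have -> : Phi = (fun u => Phi (Num.max u 0) + Phi (Num.min u 0)).
  apply/funext => u; case: hP => _ _ P0 _.
  by case: (leP u 0) => _; rewrite P0 ?addr0 ?add0r.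
have h0 : forall c : R, 0 <= Num.max c 0 by move=> c; rewrite le_max lexx orbT.
have h1 : forall c : R, Num.min c 0 <= 0 by move=> c; rewrite ge_min lexx orbT.
apply: measurable_funD.
  apply: (@nondecreasing_measurable R setT (fun u => Phi (Num.max u 0))) => // a b ab.
  by apply: Phi_mono; rewrite !ger0_norm //; exact: le_max2.
apply: (@nonincreasing_measurable R setT (fun u => Phi (Num.min u 0))) => // a b ab.
by apply: Phi_mono; rewrite !ler0_norm // lerN2; exact: le_min2.
Qed.
End phifacts.

Section gfacts.
Variables (R : realType) (d : measure_display) (T : measurableType d).
Variables (mu : {measure set T -> \bar R}) (Phi : R -> R) (x : T -> R).
Hypothesis hP : orlicz_fun Phi.
Hypothesis mx : measurable_fun setT x.

Local Notation g k := (orlicz_modular mu Phi (fun t => (k * x t)%R)).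

Lemma mPhik k : measurable_fun setT (fun t => (Phi (k * x t))%:E).
Proof.
apply/measurable_EFinP; apply: measurableT_comp; first exact: Phi_meas.
by apply: measurable_funM => //; exact: measurable_cst.
Qed.

Lemma g_ge0 k : (0 <= g k)%E.
Proof. by apply: integral_ge0 => t _; rewrite lee_fin Phi_ge0. Qed.

Lemma g_mono j k : `|j| <= `|k| -> (g j <= g k)%E.
Proof.
move=> jk; apply: ge0_le_integral => //.
- by move=> t _; rewrite lee_fin Phi_ge0.
- exact: mPhik.
- exact: mPhik.
move=> t _; rewrite lee_fin; apply: Phi_mono => //.
by rewrite !normrM ler_wpM2r.
Qed.

Definition theta (n : nat) : R := 1 - (n.+1)%:R^-1.

Lemma theta_ge0 n : 0 <= theta n.
Proof. rewrite /theta subr_ge0 invf_le1 // ?ler1n //. Qed.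

Lemma theta_le1 n : theta n <= 1.
Proof. by rewrite /theta lerBlDr lerDl invr_ge0. Qed.

Lemma theta_nd m n : (m <= n)%N -> theta m <= theta n.
Proof.
move=> mn; by rewrite /theta lerD2l lerN2 lef_pV2 ?posrE ?ltr0n // ler_nat.
Qed.

Lemma sup_pt y : ereal_sup (range (fun n => (Phi (theta n * y))%:E)) = (Phi y)%:E.
Proof.
apply/eqP; rewrite eq_le; apply/andP; split.
  apply: ge_ereal_sup => _ [n _ <-]; rewrite lee_fin; apply: Phi_mono => //.
  by rewrite normrM ger0_norm ?theta_ge0 // ler_piMl // theta_le1.
apply/lee_addgt0Pr => e e0.
have [n hn] : exists n : nat, Phi (2 * y) / e < n.+1%:R.
  exists (Num.truncn (Phi (2 * y) / e)); exact: truncnS_gt.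
apply: (@le_trans _ _ ((Phi (theta n * y))%:E + e%:E)%E).
  rewrite -EFinD lee_fin.
  have := @Phi_low R Phi hP (theta n) y (theta_ge0 n) (theta_le1 n).
  have h1 : (1 - theta n) * Phi (2 * y) <= e.
    rewrite /theta opprB addrC subrK [_ * Phi _]mulrC ler_pdivrMr ?ltr0n //.
    rewrite ltr_pdivrMr // in hn; rewrite [e * _]mulrC; exact: ltW.
  have h2 : 0 <= (1 - theta n) * Phi y.
    by apply: mulr_ge0; [rewrite subr_ge0 theta_le1 | exact: Phi_ge0].
  move=> h; nra.
by rewrite leeD2r //; apply: ereal_sup_ubound; exists n.
Qed.

Lemma g_left l : g l = ereal_sup (range (fun n => g (theta n * l))).
Proof.
have mg n : measurable_fun setT (fun t => (Phi (theta n * l * x t))%:E).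
  exact: mPhik.
have g0 n t : [set: T] t -> (0 <= (Phi (theta n * l * x t))%:E)%E.
  by move=> _; rewrite lee_fin Phi_ge0.
have nd' t m n : (m <= n)%N -> Phi (theta m * l * x t) <= Phi (theta n * l * x t).
  move=> mn; apply: Phi_mono => //.
  rewrite -!mulrA normrM [X in _ <= X]normrM ler_wpM2r //.
  by rewrite !ger0_norm ?theta_ge0 ?theta_nd.
have nd t : [set: T] t -> nondecreasing_seq (fun n => (Phi (theta n * l * x t))%:E).
  by move=> _ m n mn; rewrite lee_fin; exact: nd'.
have := monotone_convergence mu measurableT mg g0 nd.
have -> : (fun t => limn (fun n => (Phi (theta n * l * x t))%:E)) = (fun t => (Phi (l * x t))%:E).
  apply/funext => t; apply: cvg_lim => //.
  rewrite -(sup_pt (l * x t)).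
  under eq_fun do rewrite -mulrA.
  apply: ereal_nondecreasing_cvgn => m n mn.
  by have := nd t I m n mn; rewrite -!mulrA.
rewrite /orlicz_modular => ->.
apply: cvg_lim => //.
have -> : (fun n => (\int[mu]_(t in setT) (Phi (theta n * l * x t))%:E)%E) = (fun n => g (theta n * l)).
  by apply/funext => n; rewrite /orlicz_modular.
apply: ereal_nondecreasing_cvgn => m n mn.
apply: ge0_le_integral => //.
- by move=> t _; rewrite lee_fin Phi_ge0.
by move=> t _; rewrite lee_fin; exact: nd'.
Qed.
End gfacts.

Section main.
Variables (R : realType) (d : measure_display) (T : measurableType d).
Variables (mu : {measure set T -> \bar R}) (Phi : R -> R) (x : T -> R).
Variable (p : R * R -> R).
Hypothesis hP : orlicz_fun Phi.
Hypothesis mx : measurable_fun setT x.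
Hypothesis hp : lattice_norm p.
Hypothesis p10 : p (1, 0) = 1.

Local Notation g k := (orlicz_modular mu Phi (fun t => (k * x t)%R)).
Let p1ge1 s : 1 <= p (1, s) := @p1_ge1 _ p hp s p10.
Let p1lb s : 0 <= s -> s * p (0, 1) <= p (1, s) := @p1_lb _ p hp s.
Let p01 : 0 < p (0, 1) := @p01_gt0 _ p hp.
Let p1mono s s' : 0 <= s -> s <= s' -> p (1, s) <= p (1, s') := @p1_mono _ p hp s s'.
Let p1lip s s' : s <= s' -> p (1, s') <= p (1, s) + (s' - s) * p (0, 1) := @p1_lip _ p hp s s'.
Let gge0 k : (0 <= g k)%E := @g_ge0 _ _ _ mu Phi x hP k.
Let gmono j k : `|j| <= `|k| -> (g j <= g k)%E := @g_mono _ _ _ mu Phi x hP mx j k.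
Let gleft l : g l = ereal_sup (range (fun n => g (theta R n * l))) := @g_left _ _ _ mu Phi x hP mx l.

Definition Fk (k : R) := ((k^-1)%:E * p_ext p (g k))%E.

Lemma Fk_fin k r : g k = r%:E -> Fk k = (k^-1 * p (1, r))%:E.
Proof. by rewrite /Fk => ->. Qed.

Lemma Fk_inf k : 0 < k -> g k = +oo%E -> Fk k = +oo%E.
Proof. by move=> k0; rewrite /Fk => -> /=; rewrite gt0_muley // lte_fin invr_gt0. Qed.

Lemma g_real k : g k <> -oo%E.
Proof. by move=> h; have := @g_ge0 _ _ _ mu Phi x hP k; rewrite h. Qed.

Lemma Fk_ge k : 0 < k -> ((k^-1)%:E <= Fk k)%E.
Proof.
move=> k0; case E : (g k) => [r| |]; last by have := g_real k.
  by rewrite (Fk_fin _ _ E) lee_fin ler_pMr ?invr_gt0 // p1ge1.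
by rewrite Fk_inf // leey.
Qed.

Lemma Fk_lb k r : 0 < k -> 0 <= r -> (r%:E <= g k)%E ->
  ((k^-1 * p (0, 1) * r)%:E <= Fk k)%E.
Proof.
move=> k0 r0; case E : (g k) => [s| |]; last by have := g_real k.
- rewrite lee_fin => rs; rewrite (Fk_fin _ _ E) lee_fin -mulrA.
  apply: ler_wpM2l; first by rewrite invr_ge0 ltW.
  have s0 : 0 <= s by exact: le_trans rs.
  apply: le_trans (p1lb s s0); rewrite mulrC ler_wpM2r // ltW //.
- by move=> _; rewrite Fk_inf // leey.
Qed.

Lemma pext_mono s s' : (0 <= s)%E -> (s <= s')%E -> (p_ext p s <= p_ext p s')%E.
Proof.
move: s s' => [r| |] [r'| |] //=; rewrite ?lee_fin ?leey // => r0 rr.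
exact: p1mono.
Qed.

Lemma left_lsc l c : 0 < l -> (c%:E < Fk l)%E ->
  exists2 dl, 0 < dl & forall j, l - dl < j -> j <= l -> (c%:E < Fk j)%E.
Proof.
move=> l0 cF.
have [y [yl hy]] : exists y, (y < g l)%E /\ (forall s, (y < s)%E -> (s <= g l)%E ->
    ((c * l)%:E < p_ext p s)%E).
  case E : (g l) => [r| |]; last by have := g_real l.
  - move: cF; rewrite (Fk_fin _ _ E) lte_fin => cF.
    have clq : c * l < p (1, r) by move: cF; rewrite mulrC ltr_pdivlMr.
    pose eta := (p (1, r) - c * l) / (2 * p (0, 1)).
    have p0 := p01.
    have eta0 : 0 < eta by rewrite /eta divr_gt0 // ?subr_gt0 // mulr_gt0.
    have etap : eta * p (0, 1) = (p (1, r) - c * l) / 2.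
      by rewrite /eta; field; rewrite gt_eqF.
    exists (r - eta)%:E; split; first by rewrite lte_fin ltrBlDr ltrDl.
    move=> [s| |] //; rewrite lte_fin lee_fin => ys sr /=; rewrite lte_fin.
    have := p1lip _ _ sr.
    have : (r - s) * p (0, 1) < eta * p (0, 1) by rewrite ltr_pM2r //; lra.
    lra.
  - exists (`|c * l| / p (0, 1) + 1)%:E; split; first by rewrite ltey.
    move=> [s| |] //; rewrite ?lte_fin => ys _ /=; last by rewrite ltey.
    have p0 := p01.
    have h0 : 0 <= `|c * l| / p (0, 1) + 1 by rewrite addr_ge0 // divr_ge0 // ltW.
    have s0 : 0 <= s := ltW (le_lt_trans h0 ys).
    apply: lt_le_trans (p1lb s s0).
    have : (`|c * l| / p (0, 1) + 1) * p (0, 1) < s * p (0, 1) by rewrite ltr_pM2r.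
    rewrite mulrDl divfK ?gt_eqF // mul1r.
    have := ler_norm (c * l); lra.
rewrite gleft in yl; have [_ [n _ <-] yn] := ereal_sup_gt yl.
have th1 : theta R n < 1 by rewrite /theta ltrBlDr ltrDl invr_gt0 ltr0n.
exists (l - theta R n * l); first by rewrite subr_gt0 gtr_pMl.
move=> j hj jl.
have tl0 : 0 <= theta R n * l by rewrite mulr_ge0 ?theta_ge0 ?ltW.
have j0 : 0 < j by move: hj; rewrite opprB addrC subrK => /(le_lt_trans tl0).
have gj : (y < g j)%E.
  apply: lt_le_trans yn (gmono _ _ _); rewrite (ger0_norm tl0) (ger0_norm (ltW j0)).
  by move: hj; rewrite opprB addrC subrK => /ltW.
have gjl : (g j <= g l)%E by apply: gmono; rewrite (ger0_norm (ltW j0)) (ger0_norm (ltW l0)).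
have := hy _ gj gjl.
case E : (g j) => [s| |]; last by have := g_real j.
- rewrite (Fk_fin _ _ E) /= !lte_fin => h.
  have q0 : 0 <= p (1, s) by apply: le_trans (p1ge1 s).
  apply: lt_le_trans (_ : l^-1 * p (1, s) <= _).
    by rewrite mulrC ltr_pdivlMr.
  by rewrite ler_wpM2r // lef_pV2 ?posrE.
- by move=> _; rewrite Fk_inf // ltey.
Qed.

Lemma right_lsc l c : 0 < l -> (c%:E < Fk l)%E ->
  exists2 dr, 0 < dr & forall j, l <= j -> j < l + dr -> (c%:E < Fk j)%E.
Proof.
move=> l0 cF.
have [c0|c0] := leP c 0.
  exists 1 => // j lj _.
  have j0 : 0 < j := lt_le_trans l0 lj.
  apply: lt_le_trans (Fk_ge _ j0); rewrite lte_fin.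
  by apply: le_lt_trans c0 _; rewrite invr_gt0.
case E : (g l) => [r| |]; last by have := g_real l.
- move: cF; rewrite (Fk_fin _ _ E) lte_fin => cF.
  have clq : c * l < p (1, r) by move: cF; rewrite mulrC ltr_pdivlMr.
  have r0 : 0 <= r by have := gge0 l; rewrite E lee_fin.
  exists (p (1, r) / c - l).
    by rewrite subr_gt0 ltr_pdivlMr // mulrC.
  move=> j lj jlt.
  have j0 : 0 < j := lt_le_trans l0 lj.
  have gj : (r%:E <= g j)%E.
    by rewrite -E; apply: gmono; rewrite (ger0_norm (ltW j0)) (ger0_norm (ltW l0)).
  case E' : (g j) => [s| |]; last by have := g_real j.
  - rewrite (Fk_fin _ _ E') lte_fin.
    move: gj; rewrite E' lee_fin => rs.
    have qs := p1mono _ _ r0 rs.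
    move: jlt; rewrite addrC subrK ltr_pdivlMr // => jc.
    rewrite mulrC ltr_pdivlMr //; lra.
  - by rewrite Fk_inf // ltey.
- exists 1 => // j lj _.
  have j0 : 0 < j := lt_le_trans l0 lj.
  have : (+oo <= g j)%E.
    by rewrite -E; apply: gmono; rewrite (ger0_norm (ltW j0)) (ger0_norm (ltW l0)).
  by rewrite leye_eq => /eqP gj; rewrite Fk_inf // ltey.
Qed.

Lemma lsc l c : 0 < l -> (c%:E < Fk l)%E ->
  exists2 dd, 0 < dd & forall j, `|l - j| < dd -> (c%:E < Fk j)%E.
Proof.
move=> l0 cF.
have [d1 d10 h1] := left_lsc _ _ l0 cF.
have [d2 d20 h2] := right_lsc _ _ l0 cF.
exists (Num.min d1 d2); first by rewrite lt_min d10.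
move=> j; rewrite lt_min => /andP[j1 j2].
have [jl|lj] := leP j l.
  apply: h1 => //; move: j1; rewrite ger0_norm ?subr_ge0 //; lra.
apply: h2; first exact: ltW.
move: j2; rewrite ler0_norm ?subr_le0 ?ltW //; lra.
Qed.

Lemma bigset : ~ {ae mu, forall t, x t = 0} ->
  exists eps, 0 < eps /\ exists e0, 0 < e0 /\
    forall k, 0 < k -> ((Phi (k * eps) * e0)%:E <= g k)%E.
Proof.
move=> nae.
pose E (n : nat) := (fun t => `|x t|) @^-1` `[n.+1%:R^-1, +oo[%classic.
have mE n : measurable (E n).
  have mn : measurable_fun setT (fun t => `|x t|).
    by apply: measurableT_comp => //.
  have := mn measurableT _ (@measurable_itv R `[n.+1%:R^-1, +oo[).
  by rewrite setTI.
have [n hn] : exists n, mu (E n) != 0%E.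
  apply: contra_notP nae => H.
  have Hn n : mu (E n) = 0%E.
    by apply/eqP; apply: contra_notP H => h; exists n; apply/negP.
  apply: (@negligibleS _ _ _ mu (\bigcup_n E n)).
    move=> t /= xt0; have xt : 0 < `|x t| by rewrite normr_gt0; apply/eqP.
    exists (Num.truncn (`|x t|^-1)) => //=.
    rewrite /E /= in_itv /= andbT.
    rewrite -[leRHS]invrK lef_pV2 ?posrE ?invr_gt0 //.
    exact/ltW/truncnS_gt.
  apply: negligible_bigcup => k; exists (E k); split => //.
have Ege0 : (0 <= mu (E n))%E by [].
have [e0 [e00 e0E]] : exists e0, 0 < e0 /\ (e0%:E <= mu (E n))%E.
  move: hn Ege0; case: (mu (E n)) => [r| |] //.
  - move=> rn0; rewrite lee_fin => r0; exists r; split => //.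
    rewrite lt0r r0 andbT; apply: contra rn0 => /eqP ->; by [].
  - by move=> _ _; exists 1; split => //; rewrite leey.
exists (n.+1%:R^-1); split; first by rewrite invr_gt0.
exists e0; split => // k k0.
have Pk0 : 0 <= Phi (k * n.+1%:R^-1) by exact: Phi_ge0.
apply: (@le_trans _ _ (\int[mu]_(t in setT) (Phi (k * n.+1%:R^-1) * \1_(E n) t)%:E)%E).
  rewrite (@integralZl_indic _ _ _ mu setT measurableT (fun _ => E n)) //; last first.
    by move=> h; move: Pk0; rewrite leNgt h.
  rewrite integral_indic // setIT EFinM.
  by apply: lee_wpmul2l => //; rewrite lee_fin.
apply: ge0_le_integral => //.
- by move=> t _; rewrite lee_fin mulr_ge0.
- apply/measurable_EFinP; apply: measurable_funM => //.
  exact: (@mPhik _ _ _ Phi x hP mx k).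
move=> t _; rewrite lee_fin indicE.
case: (boolP (t \in E n)) => tE; last by rewrite mulr0 Phi_ge0.
rewrite mulr1; apply: Phi_mono => //.
rewrite !normrM ler_wpM2l //.
move: tE; rewrite inE /E /= in_itv /= andbT.
by rewrite [`|n.+1%:R^-1|]ger0_norm ?invr_ge0.
Qed.

Lemma Fk_gt0 k : 0 < k -> (0 < Fk k)%E.
Proof. by move=> k0; apply: lt_le_trans (Fk_ge _ k0); rewrite lte_fin invr_gt0. Qed.

Lemma main_exists :
  Phi u / u @[u --> +oo] --> +oo ->
  forall lam, 0 < lam -> (g lam < +oo)%E ->
  ~ {ae mu, forall t, x t = 0} ->
  exists l, 0 < l /\ ereal_inf [set Fk k | k in [set k : R | 0 < k]] = Fk l.
Proof.
move=> hlim lam lam0 glam nae.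
set S := [set Fk k | k in [set k : R | 0 < k]].
set m := ereal_inf S.
have mle : (m <= Fk lam)%E by apply: ereal_inf_lbound; exists lam.
have m0 : (0 <= m)%E.
  by apply: le_ereal_inf_tmp => _ [k k0 <-]; apply/ltW/Fk_gt0.
have mfin : m \is a fin_num.
  rewrite ge0_fin_numE //; apply: le_lt_trans mle _.
  case E : (g lam) => [r| |]; last by have := g_real lam.
  - by rewrite (Fk_fin _ _ E) ltey.
  - by move: glam; rewrite E.
set m0r := fine m.
have mE : m = m0r%:E by rewrite fineK.
have m0r0 : 0 <= m0r by rewrite -lee_fin -mE.
have [eps [eps0 [e0 [e00 hE]]]] := bigset nae.
have p0 := p01.
pose A := (m0r + 2) / (p (0, 1) * e0 * eps).
have A0 : 0 < A by rewrite divr_gt0 // ?mulr_gt0 //; lra.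
have [M [_ hM]] := (proj1 (cvgryPge _)) hlim A.
pose b := (`|M| + 1) / eps.
have b0 : 0 < b by rewrite divr_gt0 //; have := normr_ge0 M; lra.
have hb k : b < k -> ((m0r + 1)%:E < Fk k)%E.
  move=> bk; have k0 : 0 < k := lt_trans b0 bk.
  have ke : `|M| + 1 < k * eps by move: bk; rewrite ltr_pdivrMr.
  have ke0 : 0 < k * eps by rewrite mulr_gt0.
  have := hM (k * eps); rewrite (_ : M < k * eps); last first.
    by apply: le_lt_trans (ler_norm M) _; lra.
  move=> /(_ isT); rewrite ler_pdivlMr // => hA.
  have P0 : 0 <= Phi (k * eps) * e0 by apply: mulr_ge0; [exact: Phi_ge0 | exact: ltW].
  apply: lt_le_trans (Fk_lb _ _ k0 P0 (hE k k0)); rewrite lte_fin.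
  have : A * (k * eps) * e0 <= Phi (k * eps) * e0 by apply: ler_wpM2r => //; exact: ltW.
  have -> : A * (k * eps) * e0 = (m0r + 2) / p (0, 1) * k.
    rewrite /A; field; rewrite ?gt_eqF //.
  move=> h; rewrite -mulrA.
  have := ler_wpM2l (_ : 0 <= k^-1 * p (0, 1)) h.
  have -> : k^-1 * p (0, 1) * ((m0r + 2) / p (0, 1) * k) = m0r + 2.
    by field; rewrite ?gt_eqF.
  move=> /(_ ltac:(by rewrite mulr_ge0 ?invr_ge0 ?ltW)).
  rewrite mulrA; lra.
pose a := (m0r + 1)^-1.
have a0 : 0 < a by rewrite invr_gt0; lra.
have ha k : 0 < k -> k < a -> ((m0r + 1)%:E < Fk k)%E.
  move=> k0 ka; apply: lt_le_trans (Fk_ge _ k0); rewrite lte_fin.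
  by rewrite -[m0r + 1]invrK ltf_pV2 ?posrE ?invr_gt0 //; lra.
have H n : exists k, 0 < k /\ (Fk k < (m0r + n.+1%:R^-1)%:E)%E.
  have en : 0 < n.+1%:R^-1 :> R by rewrite invr_gt0.
  have [_ [k k0 <-] hk] := lb_ereal_inf_adherent en mfin.
  by exists k; split => //; rewrite -/m mE -EFinD in hk.
have [ks hks] := boolp.choice H.
have inv_le1 n : n.+1%:R^-1 <= (1 : R) by rewrite invf_le1 // ?ler1n.
have ksab n : a <= ks n <= b.
  have [k0 hk] := hks n.
  have hk1 : (Fk (ks n) < (m0r + 1)%:E)%E.
    by apply: lt_le_trans hk _; rewrite lee_fin lerD2l.
  apply/andP; split.
    by rewrite leNgt; apply/negP => /(ha _ k0) /(lt_trans hk1); rewrite ltxx.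
  by rewrite leNgt; apply/negP => /hb /(lt_trans hk1); rewrite ltxx.
have [l [lab hcl]] : `[a, b] `&` cluster (ks @ \oo) !=set0.
  apply: (@segment_compact R a b (ks @ \oo)); idtac.
  by exists 0%N => // n _ /=; rewrite in_itv /= ksab.
have l0 : 0 < l by move: lab; rewrite /= in_itv /= => /andP[+ _]; apply: lt_le_trans.
exists l; split => //.
apply/eqP; rewrite eq_le; apply/andP; split.
  by apply: ereal_inf_lbound; exists l.
rewrite leNgt; apply/negP => mlt.
have [c [mc cF]] : exists c, m0r < c /\ (c%:E < Fk l)%E.
  move: mlt; rewrite mE; case: (Fk l) => [r| |] //.
  - by rewrite lte_fin => mr; exists ((m0r + r) / 2); split; rewrite ?lte_fin; lra.
  - by move=> _; exists (m0r + 1); split; [lra | rewrite ltey].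
have [dd dd0 hdd] := lsc _ _ l0 cF.
pose N := Num.truncn ((c - m0r)^-1).
have := hcl (ks @` [set n | (N <= n)%N]) (ball (l : R^o) dd).
case.
- by exists N => // n /= Nn; exists n.
- exact: nbhsx_ballx.
move=> _ [[n Nn <-]] /=; rewrite -ball_normE /= => /hdd cFn.
have [_ hn] := hks n.
have : (c%:E < (m0r + n.+1%:R^-1)%:E)%E := lt_trans cFn hn.
rewrite lte_fin.
have h1 : n.+1%:R^-1 <= N.+1%:R^-1 :> R.
  by rewrite lef_pV2 ?posrE ?ltr0n // ler_nat ltnS.
have h2 : N.+1%:R^-1 < c - m0r.
  rewrite -[c - m0r]invrK ltf_pV2 ?posrE ?invr_gt0 ?subr_gt0 ?ltr0n //.
  exact: truncnS_gt.
move=> hc.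
have h3 : m0r + n.+1%:R^-1 < c.
  by apply: (le_lt_trans (_ : _ <= m0r + N.+1%:R^-1)); [rewrite lerD2l | rewrite -ltrBrDl].
by move: (lt_trans hc h3); rewrite ltxx.
Qed.
End main.

Theorem lemma1 (R : realType) (d : measure_display) (T : measurableType d)
  (mu : {measure set T -> \bar R})
  (mu_sfin : sigma_finite setT mu) (mu_compl : measure_is_complete mu)
  (p : R * R -> R) (Phi : R -> R) :
  lattice_norm p -> p (1, 0) = 1 ->
  orlicz_fun Phi ->
  Phi u / u @[u --> +oo] --> +oo ->
  forall x : T -> R, in_orlicz_space mu Phi x ->
  ~ {ae mu, forall t, x t = 0} ->
  exists l : R, 0 < l /\
    orlicz_p_norm mu Phi p x =
      ((l^-1)%:E * p_ext p (orlicz_modular mu Phi (fun t => (l * x t)%R)))%E.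
Proof.
move=> hp p10 hP hlim x [mx [lam [lam0 glam]]] nae.
have [l [l0 hl]] := @main_exists R d T mu Phi x p hP mx hp p10 hlim lam lam0 glam nae.
by exists l; split.
Qed.
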